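(* Let $\beta>0$, $\mu>0$ and $0<p<1$. Consider the system $$S_0'=\mu-\beta S_0A-\mu S_0,\qquad S_1'=(1-p)\beta S_0A-\beta S_1A-\mu S_1,\qquad A'=\beta(pS_0+S_1)A-\mu A$$ on the closed simplex $\Delta=\{(S_0,S_1,A): S_0,S_1,A\ge 0,\ S_0+S_1+A=1\}$. Then every solution starting in $\Delta$ converges, as $t\to\infty$, to an equilibrium point of the system. (Equivalently, for the planar system obtained by substituting $S_1=1-S_0-A$, $$S_0'=\mu-\beta S_0A-\mu S_0,\qquad A'=\beta[1-(1-p)S_0-A]A-\mu A,$$ on the region $S_0\ge0$, $A\ge0$, $S_0+A\le 1$, every trajectory approaches an equilibrium.)
   Context: This is the two-stage contagion model with permanent adoption: $S_0,S_1,A$ are the population fractions of naive, informed and adopter individuals; $\beta$ is the effective contact rate, $\mu$ the per capita demographic turnover rate, and $p$ the probability that a naive individual adopts upon first effective contact with an adopter. The simplex $\Delta$ is forward invariant. *)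

(* Defs.v *)
From Stdlib Require Import Reals Lra.
Open Scope R_scope.

Definition f_S0 (beta mu p : R) (s0 s1 a : R) : R := mu - beta * s0 * a - mu * s0.
Definition f_S1 (beta mu p : R) (s0 s1 a : R) : R :=
  (1 - p) * beta * s0 * a - beta * s1 * a - mu * s1.
Definition f_A (beta mu p : R) (s0 s1 a : R) : R := beta * (p * s0 + s1) * a - mu * a.

Definition in_simplex (s0 s1 a : R) : Prop :=
  0 <= s0 /\ 0 <= s1 /\ 0 <= a /\ s0 + s1 + a = 1.

Definition is_equilibrium (beta mu p : R) (s0 s1 a : R) : Prop :=
  f_S0 beta mu p s0 s1 a = 0 /\ f_S1 beta mu p s0 s1 a = 0 /\ f_A beta mu p s0 s1 a = 0.

Definition right_cont_at0 (x : R -> R) : Prop :=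
  forall eps, eps > 0 -> exists delta, delta > 0 /\
    forall t, 0 <= t < delta -> Rabs (x t - x 0) < eps.

Definition is_solution (beta mu p : R) (S0 S1 A : R -> R) : Prop :=
  (forall t, 0 < t ->
     derivable_pt_lim S0 t (f_S0 beta mu p (S0 t) (S1 t) (A t)) /\
     derivable_pt_lim S1 t (f_S1 beta mu p (S0 t) (S1 t) (A t)) /\
     derivable_pt_lim A  t (f_A  beta mu p (S0 t) (S1 t) (A t))) /\
  right_cont_at0 S0 /\ right_cont_at0 S1 /\ right_cont_at0 A.

Definition tends_at_infty (x : R -> R) (l : R) : Prop :=
  forall eps, eps > 0 -> exists T, forall t, t >= T -> Rabs (x t - l) < eps.

(* Main.v *)
Require Import Defs.
From Stdlib Require Import Reals.
From Stdlib Require Import Lra Classical.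
Open Scope R_scope.

Lemma dlim_ext f x l l' : derivable_pt_lim f x l -> l = l' -> derivable_pt_lim f x l'.
Proof. intros H ->; exact H. Qed.

Lemma dlim_mult f g x a b : derivable_pt_lim f x a -> derivable_pt_lim g x b ->
  derivable_pt_lim (fun t => f t * g t) x (a * g x + f x * b).
Proof. intros. exact (derivable_pt_lim_mult f g x a b H H0). Qed.

Lemma dlim_plus f g x a b : derivable_pt_lim f x a -> derivable_pt_lim g x b ->
  derivable_pt_lim (fun t => f t + g t) x (a + b).
Proof. intros. exact (derivable_pt_lim_plus f g x a b H H0). Qed.

Lemma dlim_minus f g x a b : derivable_pt_lim f x a -> derivable_pt_lim g x b ->
  derivable_pt_lim (fun t => f t - g t) x (a - b).
Proof. intros. exact (derivable_pt_lim_minus f g x a b H H0). Qed.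

Lemma dlim_const c x : derivable_pt_lim (fun _ => c) x 0.
Proof. exact (derivable_pt_lim_const c x). Qed.

Lemma dlim_opp f x a : derivable_pt_lim f x a -> derivable_pt_lim (fun t => - f t) x (- a).
Proof. intros. exact (derivable_pt_lim_opp f x a H). Qed.

Lemma dlim_exp_lin K x : derivable_pt_lim (fun r => exp (- K * r)) x (exp (- K * x) * (- K)).
Proof.
  assert (H1 : derivable_pt_lim (fun r => - K * r) x (- K)).
  { apply dlim_ext with (0 * x + - K * 1).
    - apply (dlim_mult (fun _ => -K) (fun r => r)). apply dlim_const. apply derivable_pt_lim_id.
    - ring. }
  exact (derivable_pt_lim_comp (fun r => - K * r) exp x (-K) (exp (-K*x)) H1 (derivable_pt_lim_exp _)).
Qed.

Lemma cont_of_dlim f x l : derivable_pt_lim f x l -> continuity_pt f x.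
Proof. intro H. apply derivable_continuous_pt. exists l. exact H. Qed.

Definition rc (f : R -> R) t0 := forall eps, eps > 0 -> exists delta, delta > 0 /\
    forall t, t0 <= t < t0 + delta -> Rabs (f t - f t0) < eps.

Lemma rc_of_rc0 f : right_cont_at0 f -> rc f 0.
Proof. intros H eps He. destruct (H eps He) as [d [Hd H']]. exists d. split; auto.
  intros t Ht. apply H'. lra. Qed.

Lemma rc_of_cont f t0 : continuity_pt f t0 -> rc f t0.
Proof.
  intros H eps He. destruct (H eps He) as [d [Hd H']]. exists d. split; [lra|].
  intros t Ht. destruct (Req_dec t t0) as [->|Hne].
  - unfold Rminus; rewrite Rplus_opp_r, Rabs_R0; lra.
  - apply (H' t). split. split; [exact I| auto]. simpl; unfold R_dist.
    rewrite Rabs_right; lra.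
Qed.

Lemma rc_plus f g t0 : rc f t0 -> rc g t0 -> rc (fun t => f t + g t) t0.
Proof.
  intros Hf Hg eps He. destruct (Hf (eps/2)) as [d1 [Hd1 H1]]; [lra|].
  destruct (Hg (eps/2)) as [d2 [Hd2 H2]]; [lra|].
  exists (Rmin d1 d2). split. apply Rmin_pos; auto.
  intros t Ht. assert (A1 := H1 t). assert (A2 := H2 t).
  assert (Rmin d1 d2 <= d1) by apply Rmin_l. assert (Rmin d1 d2 <= d2) by apply Rmin_r.
  specialize (A1 ltac:(lra)). specialize (A2 ltac:(lra)).
  replace (f t + g t - (f t0 + g t0)) with ((f t - f t0) + (g t - g t0)) by ring.
  eapply Rle_lt_trans. apply Rabs_triang. lra.
Qed.

Lemma rc_opp f t0 : rc f t0 -> rc (fun t => - f t) t0.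
Proof. intros Hf eps He. destruct (Hf eps He) as [d [Hd H]]. exists d; split; auto.
  intros t Ht. replace (- f t - - f t0) with (- (f t - f t0)) by ring. rewrite Rabs_Ropp. auto. Qed.

Lemma rc_const c t0 : rc (fun _ => c) t0.
Proof. intros eps He. exists 1. split. lra. intros. unfold Rminus; rewrite Rplus_opp_r, Rabs_R0; lra. Qed.

Definition nq (x : R) := Rmin x 0 * Rmin x 0.

Lemma nq_key x h : Rabs (nq (x + h) - nq x - 2 * Rmin x 0 * h) <= h * h.
Proof.
  unfold nq, Rmin. destruct (Rle_dec x 0); destruct (Rle_dec (x+h) 0); apply Rabs_le; split; nra.
Qed.

Lemma nq_deriv x : derivable_pt_lim nq x (2 * Rmin x 0).
Proof.
  intros eps He. exists (mkposreal eps He). intros h Hh Hlt. simpl in Hlt.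
  assert (E : (nq (x + h) - nq x) / h - 2 * Rmin x 0 = (nq (x + h) - nq x - 2 * Rmin x 0 * h) / h)
    by (field; auto).
  rewrite E. unfold Rdiv. rewrite Rabs_mult, Rabs_inv.
  assert (K := nq_key x h).
  assert (Rabs h > 0) by (apply Rabs_pos_lt; auto).
  apply Rle_lt_trans with (h * h * / Rabs h).
  - apply Rmult_le_compat_r. left; apply Rinv_0_lt_compat; auto. auto.
  - replace (h * h) with (Rabs h * Rabs h).
    + field_simplify; lra.
    + rewrite <- Rabs_mult. rewrite Rabs_right. auto. nra.
Qed.

Lemma nq_comp g x d : derivable_pt_lim g x d -> derivable_pt_lim (fun t => nq (g t)) x (2 * Rmin (g x) 0 * d).
Proof. intro H. exact (derivable_pt_lim_comp g nq x d _ H (nq_deriv (g x))). Qed.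

Lemma nq_ge0 x : 0 <= nq x.
Proof. unfold nq. nra. Qed.

Lemma nq_zero x : nq x = 0 -> 0 <= x.
Proof. unfold nq, Rmin. destruct (Rle_dec x 0); intros; nra. Qed.

Lemma abs_le_inv x a : Rabs x <= a -> - a <= x <= a.
Proof. unfold Rabs; destruct (Rcase_abs x); intros; lra. Qed.
Lemma abs_ge x : - Rabs x <= x <= Rabs x.
Proof. unfold Rabs; destruct (Rcase_abs x); lra. Qed.

Lemma gron0 (psi Dpsi : R -> R) t0 : 0 <= t0 ->
  (forall t, t0 < t -> derivable_pt_lim psi t (Dpsi t)) ->
  (forall t, t0 <= t -> 0 <= psi t) -> psi t0 = 0 -> rc psi t0 ->
  (forall T, t0 < T -> exists K, 0 <= K /\ forall t, t0 < t <= T -> Dpsi t <= K * psi t) ->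
  forall t, t0 <= t -> psi t = 0.
Proof.
  intros Ht0 Hd Hpos Hz Hrc HK t Ht.
  destruct (Req_dec t t0) as [->|Hne]; auto.
  assert (Hlt : t0 < t) by lra.
  destruct (HK t Hlt) as [K [HK0 HKb]].
  set (chi := fun s => psi s * exp (- K * s)).
  assert (Hmon : forall s, t0 < s < t -> chi t <= chi s).
  { intros s Hs.
    destruct (MVT_cor2 chi (fun r => Dpsi r * exp (- K * r) + psi r * (exp (- K * r) * - K)) s t)
      as [c [Hc1 Hc2]]; [lra| |].
    - intros c Hc. apply (dlim_mult psi (fun r => exp (- K * r))). apply Hd; lra. apply dlim_exp_lin.
    - assert (B := HKb c ltac:(lra)). assert (E := exp_pos (- K * c)).
      assert (Dpsi c * exp (- K * c) + psi c * (exp (- K * c) * - K) <= 0).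
      { replace (Dpsi c * exp (- K * c) + psi c * (exp (- K * c) * - K)) with
          ((Dpsi c - K * psi c) * exp (- K * c)) by ring. nra. }
      nra. }
  destruct (Rle_lt_or_eq_dec 0 (psi t) (Hpos t ltac:(lra))) as [Hp|Hp]; [|auto].
  exfalso.
  assert (Hchi : chi t > 0) by (unfold chi; assert (E := exp_pos (-K*t)); nra).
  destruct (Hrc (chi t) Hchi) as [d [Hd0 Hdb]].
  set (s := t0 + Rmin d (t - t0) / 2).
  assert (Hm1 : Rmin d (t - t0) <= d) by apply Rmin_l.
  assert (Hm2 : Rmin d (t - t0) <= t - t0) by apply Rmin_r.
  assert (Hm3 : 0 < Rmin d (t - t0)) by (apply Rmin_pos; lra).
  assert (Hs : t0 < s < t) by (unfold s; lra).
  assert (A1 := Hmon s Hs).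
  assert (A2 := Hdb s ltac:(unfold s; lra)).
  rewrite Hz, Rminus_0_r in A2. assert (A3 := Hpos s ltac:(lra)).
  rewrite Rabs_right in A2 by lra.
  assert (exp (- K * s) <= 1).
  { rewrite <- exp_0. destruct (Req_dec (-K * s) 0) as [E|E]. rewrite E; lra.
    left. apply exp_increasing. nra. }
  assert (psi s * exp (- K * s) <= psi s) by nra.
  assert (chi s = psi s * exp (- K * s)) by reflexivity.
  lra.
Qed.

Lemma nonneg_lemma (g D : R -> R) t0 : 0 <= t0 ->
  (forall t, t0 < t -> derivable_pt_lim g t (D t)) -> rc g t0 -> 0 <= g t0 ->
  (forall T, t0 < T -> exists K, 0 <= K /\ forall t, t0 < t <= T -> g t < 0 -> K * g t <= D t) ->
  forall t, t0 <= t -> 0 <= g t.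
Proof.
  intros Ht0 Hd Hrc Hg0 HK t Ht.
  apply nq_zero.
  apply (gron0 (fun s => nq (g s)) (fun s => 2 * Rmin (g s) 0 * D s) t0); auto.
  - intros s Hs. apply nq_comp. auto.
  - intros; apply nq_ge0.
  - unfold nq, Rmin. destruct (Rle_dec (g t0) 0); nra.
  - intros eps He. destruct (Hrc (Rmin eps 1)) as [d [Hd0 Hdb]].
    { apply Rmin_pos; lra. }
    exists d; split; auto. intros s Hs. assert (B := Hdb s Hs).
    assert (Rmin eps 1 <= eps) by apply Rmin_l. assert (Rmin eps 1 <= 1) by apply Rmin_r.
    assert (nq (g t0) = 0) by (unfold nq, Rmin; destruct (Rle_dec (g t0) 0); nra).
    rewrite H1, Rminus_0_r, Rabs_right by apply Rle_ge, nq_ge0.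
    apply Rabs_def2 in B. destruct B as [B1 B2].
    unfold nq, Rmin. destruct (Rle_dec (g s) 0); nra.
  - intros T HT. destruct (HK T HT) as [K [HK0 HKb]]. exists (2 * K). split; [lra|].
    intros s Hs. unfold nq, Rmin. destruct (Rle_dec (g s) 0) as [Hle|Hgt].
    + destruct (Req_dec (g s) 0) as [E|E]. rewrite E; nra.
      assert (B := HKb s Hs ltac:(lra)). nra.
    + nra.
Qed.

Lemma minfacts P Q : Rmin P 0 <= 0 /\ Rmin P 0 * P = Rmin P 0 * Rmin P 0 /\
  Rmin P 0 * Q <= Rmin P 0 * Rmin Q 0.
Proof. unfold Rmin. destruct (Rle_dec P 0); destruct (Rle_dec Q 0); repeat split; nra. Qed.

Lemma quadrant (P Q a b d e : R -> R) t0 M : 0 <= t0 ->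
  (forall t, t0 < t -> derivable_pt_lim P t (a t * P t + b t * Q t)) ->
  (forall t, t0 < t -> derivable_pt_lim Q t (d t * Q t + e t * P t)) ->
  rc P t0 -> rc Q t0 -> 0 <= P t0 -> 0 <= Q t0 ->
  (forall t, t0 < t -> 0 <= b t <= M /\ 0 <= e t <= M /\ Rabs (a t) <= M /\ Rabs (d t) <= M) ->
  forall t, t0 <= t -> 0 <= P t /\ 0 <= Q t.
Proof.
  intros Ht0 HP HQ rP rQ P0 Q0 Hb t Ht.
  assert (Z : nq (P t) + nq (Q t) = 0).
  { apply (gron0 (fun s => nq (P s) + nq (Q s))
      (fun s => 2 * Rmin (P s) 0 * (a s * P s + b s * Q s) + 2 * Rmin (Q s) 0 * (d s * Q s + e s * P s)) t0); auto.
    - intros s Hs. apply dlim_plus; apply nq_comp; auto.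
    - intros; assert (H1 := nq_ge0 (P t1)); assert (H2 := nq_ge0 (Q t1)); lra.
    - unfold nq, Rmin. destruct (Rle_dec (P t0) 0); destruct (Rle_dec (Q t0) 0); nra.
    - assert (E1 : nq (P t0) = 0) by (unfold nq, Rmin; destruct (Rle_dec (P t0) 0); nra).
      assert (E2 : nq (Q t0) = 0) by (unfold nq, Rmin; destruct (Rle_dec (Q t0) 0); nra).
      intros eps He. destruct (rP (Rmin (eps/2) 1)) as [d1 [Hd1 H1]]. { apply Rmin_pos; lra. }
      destruct (rQ (Rmin (eps/2) 1)) as [d2 [Hd2 H2]]. { apply Rmin_pos; lra. }
      exists (Rmin d1 d2). split. apply Rmin_pos; auto. intros s Hs.
      assert (Rmin d1 d2 <= d1) by apply Rmin_l. assert (Rmin d1 d2 <= d2) by apply Rmin_r.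
      assert (Rmin (eps/2) 1 <= eps/2) by apply Rmin_l. assert (Rmin (eps/2) 1 <= 1) by apply Rmin_r.
      assert (B1 := H1 s ltac:(lra)). assert (B2 := H2 s ltac:(lra)).
      apply Rabs_def2 in B1. apply Rabs_def2 in B2.
      rewrite E1, E2, Rplus_0_r, Rminus_0_r.
      assert (nq (P s) < eps/2) by (unfold nq, Rmin; destruct (Rle_dec (P s) 0); nra).
      assert (nq (Q s) < eps/2) by (unfold nq, Rmin; destruct (Rle_dec (Q s) 0); nra).
      assert (X1 := nq_ge0 (P s)); assert (X2 := nq_ge0 (Q s)).
      rewrite Rabs_right; lra.
    - intros T HT. exists (4 * M). split.
      { destruct (Hb T HT) as [[? ?] _]. lra. }
      intros s Hs. destruct (Hb s ltac:(lra)) as [[b0 bM] [[e0 eM] [aM dM]]].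
      destruct (minfacts (P s) (Q s)) as [m1 [m2 m3]].
      destruct (minfacts (Q s) (P s)) as [n1 [n2 n3]].
      apply abs_le_inv in aM. apply abs_le_inv in dM. unfold nq.
      set (x := Rmin (P s) 0) in *. set (y := Rmin (Q s) 0) in *. clearbody x y.
      assert (T1 : 2 * x * (a s * P s + b s * Q s) <= 2 * M * (x * x) + 2 * b s * (x * y)).
      { replace (2 * x * (a s * P s + b s * Q s)) with (2 * a s * (x * P s) + 2 * b s * (x * Q s)) by ring.
        rewrite m2. assert (0 <= x * x) by nra.
        assert (a s * (x*x) <= M*(x*x)) by (apply Rmult_le_compat_r; lra).
        assert (b s * (x * Q s) <= b s * (x*y)) by (apply Rmult_le_compat_l; lra). lra. }
      assert (T2 : 2 * y * (d s * Q s + e s * P s) <= 2 * M * (y * y) + 2 * e s * (x * y)).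
      { replace (2 * y * (d s * Q s + e s * P s)) with (2 * d s * (y * Q s) + 2 * e s * (y * P s)) by ring.
        rewrite n2. assert (0 <= y * y) by nra.
        assert (d s * (y*y) <= M*(y*y)) by (apply Rmult_le_compat_r; lra).
        assert (e s * (y * P s) <= e s * (x*y)) by (apply Rmult_le_compat_l; [lra| rewrite (Rmult_comm x y); lra]). lra. }
      assert (T3 : 2 * (x * y) <= x * x + y * y) by (pose proof (Rle_0_sqr (x-y)); unfold Rsqr in *; lra).
      assert (T4 : 0 <= x * y) by (replace (x*y) with ((-x)*(-y)) by ring; apply Rmult_le_pos; lra).
      assert (b s * (x*y) <= M * (x*y)) by (apply Rmult_le_compat_r; lra).
      assert (e s * (x*y) <= M * (x*y)) by (apply Rmult_le_compat_r; lra).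
      assert (M * (2 * (x*y)) <= M * (x*x+y*y)) by (apply Rmult_le_compat_l; lra).
      lra. }
  assert (H1 := nq_ge0 (P t)); assert (H2 := nq_ge0 (Q t)).
  split; apply nq_zero; lra.
Qed.

Lemma bounded_lemma f : right_cont_at0 f -> (forall t, 0 < t -> continuity_pt f t) ->
  forall T, exists M, forall t, 0 <= t <= T -> Rabs (f t) <= M.
Proof.
  intros Hrc Hc T. destruct (Hrc 1) as [d [Hd Hdb]]; [lra|].
  set (T' := Rmax T d).
  assert (T'd : d <= T') by apply Rmax_r. assert (T'T : T <= T') by apply Rmax_l.
  destruct (continuity_ab_maj f (d/2) T') as [Mx [HMx HMx2]]. lra.
  { intros c Hc'. apply Hc. lra. }
  destruct (continuity_ab_min f (d/2) T') as [mx [Hmx Hmx2]]. lra.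
  { intros c Hc'. apply Hc. lra. }
  exists (Rabs (f 0) + 1 + Rabs (f Mx) + Rabs (f mx)).
  intros t Ht. assert (R1 := Rabs_pos (f Mx)). assert (R2 := Rabs_pos (f mx)).
  assert (R3 := Rabs_pos (f 0)).
  destruct (Rlt_le_dec t d).
  - assert (B := Hdb t ltac:(lra)).
    assert (Rabs (f t) <= Rabs (f t - f 0) + Rabs (f 0)).
    { replace (f t) with ((f t - f 0) + f 0) at 1 by ring. apply Rabs_triang. }
    lra.
  - assert (B1 := HMx t ltac:(lra)). assert (B2 := Hmx t ltac:(lra)).
    apply Rabs_le. assert (A1 := abs_ge (f Mx)). assert (A2 := abs_ge (f mx)).
    lra.
Qed.

Lemma tends_const c : tends_at_infty (fun _ => c) c.
Proof. intros eps He. exists 0. intros. unfold Rminus; rewrite Rplus_opp_r, Rabs_R0; lra. Qed.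

Lemma tends_ext_ev f g l T0 : (forall t, t >= T0 -> f t = g t) -> tends_at_infty f l -> tends_at_infty g l.
Proof.
  intros He Hf eps Hep. destruct (Hf eps Hep) as [T HT]. exists (Rmax T T0).
  intros t Ht. assert (Rmax T T0 >= T) by (apply Rle_ge, Rmax_l).
  assert (Rmax T T0 >= T0) by (apply Rle_ge, Rmax_r).
  rewrite <- He by lra. apply HT. lra.
Qed.

Lemma tends_plus f g a b : tends_at_infty f a -> tends_at_infty g b -> tends_at_infty (fun t => f t + g t) (a + b).
Proof.
  intros Hf Hg eps He. destruct (Hf (eps/2)) as [T1 H1]; [lra|]. destruct (Hg (eps/2)) as [T2 H2]; [lra|].
  exists (Rmax T1 T2). intros t Ht.
  assert (Rmax T1 T2 >= T1) by (apply Rle_ge, Rmax_l). assert (Rmax T1 T2 >= T2) by (apply Rle_ge, Rmax_r).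
  assert (B1 := H1 t ltac:(lra)). assert (B2 := H2 t ltac:(lra)).
  replace (f t + g t - (a + b)) with ((f t - a) + (g t - b)) by ring.
  eapply Rle_lt_trans. apply Rabs_triang. lra.
Qed.

Lemma tends_opp f a : tends_at_infty f a -> tends_at_infty (fun t => - f t) (- a).
Proof. intros Hf eps He. destruct (Hf eps He) as [T HT]. exists T. intros t Ht.
  replace (- f t - - a) with (- (f t - a)) by ring. rewrite Rabs_Ropp. auto. Qed.

Lemma tends_minus f g a b : tends_at_infty f a -> tends_at_infty g b -> tends_at_infty (fun t => f t - g t) (a - b).
Proof. intros. apply (tends_plus f (fun t => - g t) a (- b)); auto. apply tends_opp; auto. Qed.

Lemma tends_mult f g a b : tends_at_infty f a -> tends_at_infty g b -> tends_at_infty (fun t => f t * g t) (a * b).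
Proof.
  intros Hf Hg eps He.
  set (C := 1 + Rabs a + Rabs b).
  assert (HC : C >= 1) by (unfold C; assert (X1 := Rabs_pos a); assert (X2 := Rabs_pos b); lra).
  set (eta := Rmin 1 (eps / (2 * C))).
  assert (Heta : 0 < eta) by (apply Rmin_pos; [lra| apply Rdiv_lt_0_compat; lra]).
  assert (E1 : eta <= 1) by apply Rmin_l. assert (E2 : eta <= eps / (2 * C)) by apply Rmin_r.
  destruct (Hf eta Heta) as [T1 H1]. destruct (Hg eta Heta) as [T2 H2].
  exists (Rmax T1 T2). intros t Ht.
  assert (Rmax T1 T2 >= T1) by (apply Rle_ge, Rmax_l). assert (Rmax T1 T2 >= T2) by (apply Rle_ge, Rmax_r).
  assert (B1 := H1 t ltac:(lra)). assert (B2 := H2 t ltac:(lra)).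
  replace (f t * g t - a * b) with ((f t - a) * (g t - b) + a * (g t - b) + b * (f t - a)) by ring.
  eapply Rle_lt_trans. apply Rabs_triang. eapply Rle_lt_trans. apply Rplus_le_compat_r. apply Rabs_triang.
  rewrite !Rabs_mult.
  assert (X1 := Rabs_pos a); assert (X2 := Rabs_pos b); assert (X3 := Rabs_pos (f t - a)); assert (X4 := Rabs_pos (g t - b)).
  assert (Rabs (f t - a) * Rabs (g t - b) <= eta * eta) by (apply Rmult_le_compat; lra).
  assert (Rabs a * Rabs (g t - b) <= Rabs a * eta) by (apply Rmult_le_compat_l; lra).
  assert (Rabs b * Rabs (f t - a) <= Rabs b * eta) by (apply Rmult_le_compat_l; lra).
  assert (eta * eta <= eta) by (assert (eta * eta <= 1 * eta) by (apply Rmult_le_compat_r; lra); lra).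
  assert (HH : eta * C <= eps / 2).
  { assert (HH' : eta * C <= eps / (2 * C) * C) by (apply Rmult_le_compat_r; lra).
    replace (eps / (2 * C) * C) with (eps / 2) in HH' by (field; lra). lra. }
  unfold C in HH. lra.
Qed.

Lemma mono_incr f D a b : a < b -> (forall t, a <= t <= b -> derivable_pt_lim f t (D t)) ->
  (forall t, a <= t <= b -> 0 <= D t) -> f a <= f b.
Proof.
  intros Hab Hd Hp. destruct (MVT_cor2 f D a b Hab Hd) as [c [Hc1 Hc2]].
  assert (0 <= D c) by (apply Hp; lra). nra.
Qed.

Lemma mono_conv f D t0 B : (forall t, t0 <= t -> derivable_pt_lim f t (D t)) ->
  (forall t, t0 <= t -> 0 <= D t) -> (forall t, t0 <= t -> f t <= B) -> exists l, tends_at_infty f l.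
Proof.
  intros Hd Hp Hb.
  set (E := fun y => exists t, t0 <= t /\ y = f t).
  destruct (completeness E) as [l [Hub Hlub]].
  { exists B. intros y [t [Ht ->]]. auto. }
  { exists (f t0). exists t0. split; [lra|auto]. }
  exists l. intros eps He.
  assert (Hex : exists t1, t0 <= t1 /\ f t1 > l - eps).
  { apply NNPP. intro Hn. assert (is_upper_bound E (l - eps)).
    { intros y [t [Ht ->]]. apply Rnot_lt_le. intro Hc. apply Hn. exists t. split; auto. }
    assert (Hl := Hlub _ H). lra. }
  destruct Hex as [t1 [Ht1 Hf1]]. exists t1. intros t Ht.
  assert (f t1 <= f t).
  { destruct (Req_dec t t1) as [->|Hne]; [lra|].
    apply (mono_incr f D); [lra| intros; apply Hd; lra | intros; apply Hp; lra]. }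
  assert (f t <= l) by (apply Hub; exists t; split; [lra|auto]).
  rewrite Rabs_left1 by lra. lra.
Qed.

Lemma mono_conv2 f D t0 : (forall t, t0 <= t -> derivable_pt_lim f t (D t)) ->
  ((forall t, t0 <= t -> 0 <= D t) \/ (forall t, t0 <= t -> D t <= 0)) ->
  (forall t, t0 <= t -> 0 <= f t <= 1) -> exists l, tends_at_infty f l.
Proof.
  intros Hd [Hp|Hn] Hb.
  - apply (mono_conv f D t0 1); auto. intros; apply Hb; auto.
  - destruct (mono_conv (fun t => - f t) (fun t => - D t) t0 0) as [l Hl].
    + intros; apply dlim_opp; auto.
    + intros t Ht; assert (Hn' := Hn t Ht); lra.
    + intros t Ht; assert (Hb' := Hb t Ht); lra.
    + exists (- l). apply tends_ext_ev with (f := fun t => - - f t) (T0 := 0).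
      intros; ring. apply tends_opp; auto.
Qed.

Lemma deriv_lim0 f D c : (forall t, 0 < t -> derivable_pt_lim f t (D t)) ->
  (forall t, 0 < t -> Rabs (f t) <= 1) -> tends_at_infty D c -> c = 0.
Proof.
  intros Hd Hb Hl. apply NNPP. intro Hc.
  assert (Hcp : Rabs c > 0) by (apply Rabs_pos_lt; auto).
  destruct (Hl (Rabs c / 2)) as [T HT]; [lra|].
  set (a := Rmax T 1). assert (a >= T) by (apply Rle_ge, Rmax_l). assert (a >= 1) by (apply Rle_ge, Rmax_r).
  set (b := a + 4 / Rabs c). assert (Hq : 4 / Rabs c > 0) by (apply Rdiv_lt_0_compat; lra).
  destruct (MVT_cor2 f D a b) as [x [Hx1 Hx2]]; [unfold b; lra| intros; apply Hd; lra |].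
  assert (B := HT x ltac:(lra)).
  assert (Rabs (D x) > Rabs c / 2).
  { assert (Rabs c <= Rabs (D x) + Rabs (c - D x)).
    { replace c with (D x + (c - D x)) at 1 by ring. apply Rabs_triang. }
    rewrite <- Rabs_Ropp in B. replace (- (D x - c)) with (c - D x) in B by ring. lra. }
  assert (Rabs (f b - f a) > 2).
  { rewrite Hx1, Rabs_mult. replace (b - a) with (4 / Rabs c) by (unfold b; ring).
    rewrite (Rabs_right (4 / Rabs c)) by lra.
    assert (Rabs (D x) * (4 / Rabs c) > Rabs c / 2 * (4 / Rabs c)) by (apply Rmult_gt_compat_r; lra).
    replace (Rabs c / 2 * (4 / Rabs c)) with 2 in H2 by (field; lra). lra. }
  assert (B1 := Hb a ltac:(lra)). assert (B2 := Hb b ltac:(unfold b; lra)).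
  assert (Rabs (f b - f a) <= Rabs (f b) + Rabs (f a)).
  { unfold Rminus. eapply Rle_trans. apply Rabs_triang. rewrite Rabs_Ropp. lra. }
  lra.
Qed.

Lemma rc_minus_const f c t0 : rc f t0 -> rc (fun t => f t - c) t0.
Proof. intros H. exact (rc_plus f (fun _ => - c) t0 H (rc_const (- c) t0)). Qed.

Theorem proposition1 (beta mu p : R) (S0 S1 A : R -> R) :
  beta > 0 -> mu > 0 -> 0 < p < 1 ->
  is_solution beta mu p S0 S1 A ->
  in_simplex (S0 0) (S1 0) (A 0) ->
  exists e0 e1 ea : R,
    is_equilibrium beta mu p e0 e1 ea /\
    tends_at_infty S0 e0 /\ tends_at_infty S1 e1 /\ tends_at_infty A ea.
Proof.
  intros Hb Hm [Hp0 Hp1] [Hd [R0 [R1 R2]]] [I0 [I1 [I2 I3]]].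
  assert (C0 : forall t, 0 < t -> continuity_pt S0 t) by (intros t Ht; destruct (Hd t Ht) as [X _]; exact (cont_of_dlim _ _ _ X)).
  assert (C1 : forall t, 0 < t -> continuity_pt S1 t) by (intros t Ht; destruct (Hd t Ht) as [_ [X _]]; exact (cont_of_dlim _ _ _ X)).
  assert (C2 : forall t, 0 < t -> continuity_pt A t) by (intros t Ht; destruct (Hd t Ht) as [_ [_ X]]; exact (cont_of_dlim _ _ _ X)).
  assert (HN1 : forall t, 0 <= t -> 0 <= S0 t + S1 t + A t - 1).
  { apply (nonneg_lemma _ (fun t => - mu * (S0 t + S1 t + A t - 1))); [lra| | | lra |].
    - intros t Ht. destruct (Hd t Ht) as [d0 [d1 d2]]. eapply dlim_ext.
      apply dlim_minus; [| apply dlim_const]. apply dlim_plus; [apply dlim_plus|]; eauto.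
      unfold f_S0, f_S1, f_A; ring.
    - apply rc_minus_const. apply rc_plus; [apply rc_plus|]; apply rc_of_rc0; auto.
    - intros T HT. exists 0. split; [lra|]. intros t Ht Hn. nra. }
  assert (HN2 : forall t, 0 <= t -> 0 <= - (S0 t + S1 t + A t - 1)).
  { apply (nonneg_lemma _ (fun t => mu * (S0 t + S1 t + A t - 1))); [lra| | | lra |].
    - intros t Ht. destruct (Hd t Ht) as [d0 [d1 d2]]. eapply dlim_ext. apply dlim_opp.
      apply dlim_minus; [| apply dlim_const]. apply dlim_plus; [apply dlim_plus|]; eauto.
      unfold f_S0, f_S1, f_A; ring.
    - apply rc_opp. apply rc_minus_const. apply rc_plus; [apply rc_plus|]; apply rc_of_rc0; auto.
    - intros T HT. exists 0. split; [lra|]. intros t Ht Hn. nra. }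
  assert (HN : forall t, 0 <= t -> S0 t + S1 t + A t = 1).
  { intros t Ht. assert (X1 := HN1 t Ht). assert (X2 := HN2 t Ht). lra. }
  clear HN1 HN2.
  assert (PA : forall t, 0 <= t -> 0 <= A t).
  { apply (nonneg_lemma _ (fun t => f_A beta mu p (S0 t) (S1 t) (A t))); [lra| | | lra |].
    - intros t Ht; apply (Hd t Ht).
    - apply rc_of_rc0; auto.
    - intros T HT. destruct (bounded_lemma S0 R0 C0 T) as [M0 HM0].
      destruct (bounded_lemma S1 R1 C1 T) as [M1 HM1].
      exists (beta * (Rabs M0 + Rabs M1)). split.
      { assert (X1 := Rabs_pos M0); assert (X2 := Rabs_pos M1); nra. }
      intros t Ht Hn.
      assert (B0 := abs_le_inv _ _ (HM0 t ltac:(lra))). assert (B1 := abs_le_inv _ _ (HM1 t ltac:(lra))).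
      assert (X1 := abs_ge M0); assert (X2 := abs_ge M1).
      assert (Hc : beta * (p * S0 t + S1 t) - mu <= beta * (Rabs M0 + Rabs M1)).
      { assert (p * S0 t <= Rabs M0) by nra. nra. }
      unfold f_A. replace (beta * (p * S0 t + S1 t) * A t - mu * A t) with ((beta * (p * S0 t + S1 t) - mu) * A t) by ring.
      nra. }
  assert (P0 : forall t, 0 <= t -> 0 <= S0 t).
  { apply (nonneg_lemma _ (fun t => f_S0 beta mu p (S0 t) (S1 t) (A t))); [lra| | | lra |].
    - intros t Ht; apply (Hd t Ht).
    - apply rc_of_rc0; auto.
    - intros T HT. exists 0. split; [lra|]. intros t Ht Hn.
      assert (X := PA t ltac:(lra)). unfold f_S0.
      assert (0 <= beta * (- S0 t) * A t) by (apply Rmult_le_pos; [apply Rmult_le_pos|]; lra).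
      nra. }
  assert (P1 : forall t, 0 <= t -> 0 <= S1 t).
  { apply (nonneg_lemma _ (fun t => f_S1 beta mu p (S0 t) (S1 t) (A t))); [lra| | | lra |].
    - intros t Ht; apply (Hd t Ht).
    - apply rc_of_rc0; auto.
    - intros T HT. exists 0. split; [lra|]. intros t Ht Hn.
      assert (X := PA t ltac:(lra)). assert (X' := P0 t ltac:(lra)). unfold f_S1.
      assert (0 <= (1 - p) * beta * S0 t * A t).
      { apply Rmult_le_pos; [|lra]. apply Rmult_le_pos; [|lra]. apply Rmult_le_pos; lra. }
      assert (0 <= beta * (- S1 t) * A t) by (apply Rmult_le_pos; [apply Rmult_le_pos|]; lra).
      nra. }
  set (u := fun t => f_S0 beta mu p (S0 t) (S1 t) (A t)).
  set (v := fun t => f_A beta mu p (S0 t) (S1 t) (A t)).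
  assert (Hu : forall t, 0 < t -> derivable_pt_lim u t (- (beta * A t + mu) * u t - beta * S0 t * v t)).
  { intros t Ht. destruct (Hd t Ht) as [d0 [d1 d2]]. unfold u, v, f_S0.
    eapply dlim_ext.
    apply dlim_minus; [apply dlim_minus; [apply dlim_const|]|].
    apply dlim_mult; [apply dlim_mult; [apply dlim_const|]|]; eauto.
    apply dlim_mult; [apply dlim_const|]; eauto.
    unfold f_S0, f_A; ring. }
  assert (Hv : forall t, 0 < t -> derivable_pt_lim v t
     ((beta * (p * S0 t + S1 t) - mu - beta * A t) * v t - beta * (1 - p) * A t * u t)).
  { intros t Ht. destruct (Hd t Ht) as [d0 [d1 d2]]. unfold u, v, f_A at 1.
    eapply dlim_ext.
    apply dlim_minus.
    apply dlim_mult; [apply dlim_mult; [apply dlim_const|]|]; eauto.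
    apply dlim_plus; [apply dlim_mult; [apply dlim_const|]|]; eauto.
    apply dlim_mult; [apply dlim_const|]; eauto.
    assert (E1 : S1 t = 1 - S0 t - A t) by (assert (X := HN t ltac:(lra)); lra).
    unfold f_S0, f_S1, f_A. rewrite E1. ring. }
  assert (Hbd : forall t, 0 < t -> 0 <= S0 t <= 1 /\ 0 <= S1 t <= 1 /\ 0 <= A t <= 1).
  { intros t Ht. assert (X := HN t ltac:(lra)). assert (X0 := P0 t ltac:(lra)).
    assert (X1 := P1 t ltac:(lra)). assert (X2 := PA t ltac:(lra)). lra. }
  assert (Hcoef : forall t, 0 < t ->
     0 <= beta * S0 t <= 2 * beta + mu /\ 0 <= beta * (1 - p) * A t <= 2 * beta + mu /\
     Rabs (- (beta * A t + mu)) <= 2 * beta + mu /\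
     Rabs (beta * (p * S0 t + S1 t) - mu - beta * A t) <= 2 * beta + mu).
  { intros t Ht. destruct (Hbd t Ht) as [[a0 a1] [[b0 b1] [c0 c1]]].
    assert (0 <= p * S0 t <= S0 t) by (split; [apply Rmult_le_pos; lra| assert (p * S0 t <= 1 * S0 t) by (apply Rmult_le_compat_r; lra); lra]).
    assert (HX := HN t ltac:(lra)).
    assert (0 <= beta * S0 t <= beta) by (split; [apply Rmult_le_pos; lra| assert (beta * S0 t <= beta * 1) by (apply Rmult_le_compat_l; lra); lra]).
    assert (0 <= beta * A t <= beta) by (split; [apply Rmult_le_pos; lra| assert (beta * A t <= beta * 1) by (apply Rmult_le_compat_l; lra); lra]).
    assert (0 <= beta * (p * S0 t + S1 t) <= beta) by (split; [apply Rmult_le_pos; lra| assert (beta * (p * S0 t + S1 t) <= beta * 1) by (apply Rmult_le_compat_l; lra); lra]).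
    assert (0 <= beta * (1 - p) * A t <= beta).
    { replace (beta * (1 - p) * A t) with ((1 - p) * (beta * A t)) by ring.
      split; [apply Rmult_le_pos; lra| assert ((1 - p) * (beta * A t) <= 1 * (beta * A t)) by (apply Rmult_le_compat_r; lra); lra]. }
    repeat split; try lra; apply Rabs_le; split; lra. }
  assert (Cu : forall t, 0 < t -> continuity_pt u t) by (intros t Ht; exact (cont_of_dlim _ _ _ (Hu t Ht))).
  assert (Cv : forall t, 0 < t -> continuity_pt v t) by (intros t Ht; exact (cont_of_dlim _ _ _ (Hv t Ht))).
  assert (Q1 : forall t0, 0 < t0 -> 0 <= u t0 -> v t0 <= 0 -> forall t, t0 <= t -> 0 <= u t /\ v t <= 0).
  { intros t0 Ht0 Hu0 Hv0 t Ht.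
    assert (X := quadrant u (fun s => - v s) (fun s => - (beta * A s + mu)) (fun s => beta * S0 s)
      (fun s => beta * (p * S0 s + S1 s) - mu - beta * A s) (fun s => beta * (1 - p) * A s) t0 (2 * beta + mu)
      ltac:(lra)).
    assert (Z : 0 <= u t /\ 0 <= - v t); [|lra].
    apply X; cbv beta; try lra.
    - intros s Hs. eapply dlim_ext. apply Hu; lra. ring.
    - intros s Hs. eapply dlim_ext. apply dlim_opp. apply Hv; lra. ring.
    - apply rc_of_cont; apply Cu; lra.
    - apply rc_opp, rc_of_cont; apply Cv; lra.
    - intros s Hs; apply Hcoef; lra. }
  assert (Q2 : forall t0, 0 < t0 -> u t0 <= 0 -> 0 <= v t0 -> forall t, t0 <= t -> u t <= 0 /\ 0 <= v t).
  { intros t0 Ht0 Hu0 Hv0 t Ht.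
    assert (X := quadrant (fun s => - u s) v (fun s => - (beta * A s + mu)) (fun s => beta * S0 s)
      (fun s => beta * (p * S0 s + S1 s) - mu - beta * A s) (fun s => beta * (1 - p) * A s) t0 (2 * beta + mu)
      ltac:(lra)).
    assert (Z : 0 <= - u t /\ 0 <= v t); [|lra].
    apply X; cbv beta; try lra.
    - intros s Hs. eapply dlim_ext. apply dlim_opp. apply Hu; lra. ring.
    - intros s Hs. eapply dlim_ext. apply Hv; lra. ring.
    - apply rc_opp, rc_of_cont; apply Cu; lra.
    - apply rc_of_cont; apply Cv; lra.
    - intros s Hs; apply Hcoef; lra. }
  assert (Hev : exists t0, 0 < t0 /\ ((forall t, t0 <= t -> 0 <= u t) \/ (forall t, t0 <= t -> u t <= 0)) /\
     ((forall t, t0 <= t -> 0 <= v t) \/ (forall t, t0 <= t -> v t <= 0))).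
  { destruct (classic (exists t0, 0 < t0 /\ 0 <= u t0 /\ v t0 <= 0)) as [[t0 [H1 [H2 H3]]]|N1].
    { exists t0. split; auto. split; [left|right]; intros t Ht; apply (Q1 t0 H1 H2 H3 t Ht). }
    destruct (classic (exists t0, 0 < t0 /\ u t0 <= 0 /\ 0 <= v t0)) as [[t0 [H1 [H2 H3]]]|N2].
    { exists t0. split; auto. split; [right|left]; intros t Ht; apply (Q2 t0 H1 H2 H3 t Ht). }
    assert (Hsg : forall t, 0 < t -> (0 < u t /\ 0 < v t) \/ (u t < 0 /\ v t < 0)).
    { intros t Ht. destruct (Rlt_le_dec 0 (u t)) as [a|a]; destruct (Rlt_le_dec 0 (v t)) as [b|b].
      - left; auto.
      - exfalso; apply N1; exists t; repeat split; lra.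
      - exfalso; apply N2; exists t; repeat split; lra.
      - destruct (Req_dec (u t) 0). { exfalso; apply N1; exists t; repeat split; lra. }
        destruct (Req_dec (v t) 0). { exfalso; apply N2; exists t; repeat split; lra. }
        right; lra. }
    exists 1. split; [lra|].
    destruct (Hsg 1 ltac:(lra)) as [[a b]|[a b]].
    - assert (Hpos : forall t, 1 <= t -> 0 < u t).
      { intros t Ht. destruct (Hsg t ltac:(lra)) as [[c _]|[c _]]; auto. exfalso.
        assert (Ht1 : 1 < t) by (destruct (Req_dec t 1) as [E|E]; [rewrite E in c; lra|lra]).
        destruct (Ranalysis5.IVT_interv (fun s => - u s) 1 t) as [z [Hz1 Hz2]]; [| lra | lra | lra |].
        - intros a0 Ha0. apply (continuity_pt_opp u). apply Cu; lra.
        - destruct (Hsg z ltac:(lra)) as [[c1 _]|[c1 _]]; lra. }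
      split; left; intros t Ht; assert (X := Hpos t Ht); destruct (Hsg t ltac:(lra)) as [[? ?]|[? ?]]; lra.
    - assert (Hneg : forall t, 1 <= t -> u t < 0).
      { intros t Ht. destruct (Hsg t ltac:(lra)) as [[c _]|[c _]]; auto. exfalso.
        assert (Ht1 : 1 < t) by (destruct (Req_dec t 1) as [E|E]; [rewrite E in c; lra|lra]).
        destruct (Ranalysis5.IVT_interv u 1 t) as [z [Hz1 Hz2]]; [| lra | lra | lra |].
        - intros a0 Ha0. apply Cu; lra.
        - destruct (Hsg z ltac:(lra)) as [[c1 _]|[c1 _]]; lra. }
      split; right; intros t Ht; assert (X := Hneg t Ht); destruct (Hsg t ltac:(lra)) as [[? ?]|[? ?]]; lra. }
  destruct Hev as [t0 [Ht0 [Hus Hvs]]].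
  destruct (mono_conv2 S0 u t0) as [e0 He0].
  { intros t Ht; apply (Hd t ltac:(lra)). } { exact Hus. } { intros t Ht; apply Hbd; lra. }
  destruct (mono_conv2 A v t0) as [ea Hea].
  { intros t Ht; apply (Hd t ltac:(lra)). } { exact Hvs. } { intros t Ht; apply Hbd; lra. }
  set (e1 := 1 - e0 - ea).
  assert (He1 : tends_at_infty S1 e1).
  { apply tends_ext_ev with (f := fun t => 1 - S0 t - A t) (T0 := 1).
    - intros t Ht. assert (X := HN t ltac:(lra)). lra.
    - apply tends_minus; [apply tends_minus; [apply tends_const|]|]; auto. }
  exists e0, e1, ea. split; [|auto].
  assert (Tu : tends_at_infty u (f_S0 beta mu p e0 e1 ea)).
  { unfold u, f_S0. apply tends_minus; [apply tends_minus; [apply tends_const|]|].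
    - apply tends_mult; [apply tends_mult; [apply tends_const|]|]; auto.
    - apply tends_mult; [apply tends_const|]; auto. }
  assert (Tv : tends_at_infty v (f_A beta mu p e0 e1 ea)).
  { unfold v, f_A. apply tends_minus.
    - apply tends_mult; [apply tends_mult; [apply tends_const|]|]; auto.
      apply tends_plus; [apply tends_mult; [apply tends_const|]|]; auto.
    - apply tends_mult; [apply tends_const|]; auto. }
  assert (Z0 : f_S0 beta mu p e0 e1 ea = 0).
  { apply (deriv_lim0 S0 u); auto.
    - intros t Ht; apply (Hd t Ht).
    - intros t Ht. destruct (Hbd t Ht) as [X _]. apply Rabs_le; lra. }
  assert (Z2 : f_A beta mu p e0 e1 ea = 0).
  { apply (deriv_lim0 A v); auto.
    - intros t Ht; apply (Hd t Ht).
    - intros t Ht. destruct (Hbd t Ht) as [_ [_ X]]. apply Rabs_le; lra. }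
  assert (f_S1 beta mu p e0 e1 ea = - f_S0 beta mu p e0 e1 ea - f_A beta mu p e0 e1 ea)
    by (unfold e1, f_S0, f_S1, f_A; ring).
  unfold is_equilibrium. lra.
Qed.
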